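(* Let $Y$ be a second countable locally compact connected Abelian group with character group $X$. Let $h$ be a real-valued characteristic function on $Y$ satisfying $h(2y)=2h^2(y)-1$ for all $y\in Y$. Then there is $x_0\in X$ such that $h(y)=\operatorname{Re}\,(x_0,y)$ for all $y\in Y$.
   Context: A function $h$ on $Y$ is a characteristic function if there is a probability distribution $\mu$ on $X$ with $h(y)=\int_X (x,y)\,d\mu(x)$ for all $y\in Y$, where $(x,y)$ is the value of the character $y$ at $x$ (equivalently of $x$ at $y$ under Pontryagin duality). *)

(* Defs.v *)
From HB Require Import structures.
From mathcomp Require Import all_boot all_order all_algebra.
From mathcomp Require Import all_classical all_reals all_analysis.
From mathcomp Require Import complex.
Set Implicit Arguments. Unset Strict Implicit. Unset Printing Implicit Defensive.
Import Order.TTheory GRing.Theory Num.Theory.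
Import numFieldTopology.Exports numFieldNormedType.Exports.
Local Open Scope classical_set_scope.
Local Open Scope ring_scope.

(* The complex numbers R[i] with their usual (norm) topology: we copy the
   canonical pseudometric structure that MathComp-Analysis gives to any
   numClosedFieldType (here complex R), so that it is found on R[i]. *)
#[non_forgetful_inheritance]
HB.instance Definition _ (R : rcfType) :=
  PseudoPointedMetric.copy (R[i]) (R[i] : numClosedFieldType)^o.

Definition is_character (R : realType) (Y : topologicalZmodType)
    (f : Y -> R[i]) : Prop :=
  [/\ continuous f,
      (forall a b : Y, f (a + b) = f a * f b) &
      (forall y : Y, `|f y| = 1)].

Definition char_group (R : realType) (Y : topologicalZmodType) : Type :=
  set_type (@is_character R Y : set {compact-open, Y -> R[i]}).

Section char_group_instances.
Context (R : realType) (Y : topologicalZmodType).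

HB.instance Definition _ := Topological.on (char_group R Y).

(* The trivial character y |-> 1, used to make X a pointed type (needed to
   build the Borel sigma-algebra in MathComp-Analysis). *)
Lemma trivial_is_character :
  @is_character R Y (fun _ => 1).
Proof.
split; [move=> y; exact: cvg_cst | by move=> a b; rewrite mulr1 |
  by move=> y; rewrite normr1].
Qed.

Definition trivial_character : char_group R Y :=
  exist _ ((fun _ => 1) : {compact-open, Y -> R[i]}) (mem_set trivial_is_character).

HB.instance Definition _ := isPointed.Build (char_group R Y) trivial_character.

End char_group_instances.

Definition char_val (R : realType) (Y : topologicalZmodType)
    (x : char_group R Y) (y : Y) : R[i] := (set_val x : Y -> R[i]) y.


(* h : Y -> R is a (real-valued) characteristic function: there is a
   probability (Borel) measure mu on X with h y = \int_X (x, y) dmu(x);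
   the complex integral is split into its real and imaginary parts. *)
Definition is_real_char_fun (R : realType) (Y : topologicalZmodType)
    (h : Y -> R) : Prop :=
  exists mu : probability (g_sigma_algebraType (@open (char_group R Y))) R,
    forall y : Y,
      (\int[mu]_x (complex.Re (@char_val R Y x y))%:E = (h y)%:E)%E /\
      (\int[mu]_x (complex.Im (@char_val R Y x y))%:E = 0)%E.

(* Main.v *)
Require Import Defs.
From HB Require Import structures.
From mathcomp Require Import all_boot all_order all_algebra.
From mathcomp Require Import all_classical all_reals all_analysis.
From mathcomp Require Import complex.
From mathcomp Require Import measurable_realfun.
From mathcomp Require Import ring lra.
Import Order.TTheory GRing.Theory Num.Theory.
Import numFieldTopology.Exports numFieldNormedType.Exports.
Local Open Scope classical_set_scope.
Local Open Scope ring_scope.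
Lemma eval_co_cont (T U : topologicalType) (y : T) :
  continuous (fun f : {compact-open, T -> U} => f y).
Proof.
move=> f W /= Wfy.
have := (@compact_open_cvgP T U (nbhs f) f (nbhs_filter f)) => -[] // + _.
have cy : compact [set y] by exact: compact_set1.
move=> /(_ (@cvg_id _ (nbhs f)) [set y] (interior W) cy (@open_interior _ W)) H.
have : nbhs f [set g | [set g x | x in [set y]] `<=` W°].
  by apply: H => _ [z -> <-].
move=> nH; apply: (@filterS _ _ (nbhs_filter f) _ _ _ nH) => g /= Hg; apply: interior_subset; apply: Hg; by exists y.
Qed.
Lemma Re_le_norm (R : rcfType) (z : R[i]) : `|complex.Re z| <= complex.Re `|z|.
Proof.
rewrite normc_def /=.
case: z => a b /=.
rewrite -sqrtr_sqr ler_sqrt ?addr_ge0 ?sqr_ge0 // lerDl sqr_ge0 //.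
Qed.

Lemma Re_cont (R : realType) : continuous (fun z : R[i] => complex.Re z).
Proof.
move=> z; apply/(@cvgrPdist_lt _ _ _ _ (nbhs_filter z)) => e e0.
exists (e%:C)%C; first by rewrite /= ltcR.
move=> w; rewrite /ball /= => H.
rewrite -raddfB /=.
move: H; rewrite ltcE => /andP [_ H].
exact: (le_lt_trans (Re_le_norm _ (z - w)) H).
Qed.

Lemma char_Re_cont (R : realType) (Y : topologicalZmodType) (y : Y) :
  continuous (fun x : char_group R Y => complex.Re (char_val x y)).
Proof.
move=> x.
pose sv := (@set_val _ (@is_character R Y : set {compact-open, Y -> R[i]})).
have c1 : {for x, continuous sv} by exact: initial_continuous.
have c2 := @eval_co_cont Y R[i] y (sv x).
have c3 := @continuous_comp _ _ _ sv (fun f : {compact-open, Y -> R[i]} => f y) x c1 c2.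
exact: (@continuous_comp _ _ _ _ (fun z : R[i] => complex.Re z) x c3 (@Re_cont R _)).
Qed.

Lemma char_Re_meas (R : realType) (Y : topologicalZmodType) (y : Y) :
  measurable_fun [set: g_sigma_algebraType (@open (char_group R Y))]
    (fun x : char_group R Y => complex.Re (char_val x y)).
Proof.
apply: (measurability _ (RGenOpens.measurableE R)) => _ [_ [a [b ->]] <-].
rewrite setTI; apply: sub_sigma_algebra.
have /continuousP := @char_Re_cont R Y y; apply.
exact: interval_open.
Qed.
Lemma Re_sq (R : rcfType) (z : R[i]) : `|z| = 1 -> complex.Re (z * z) = 2 * complex.Re z ^+ 2 - 1.
Proof.
rewrite normc_def; case: z => a b /= /(congr1 (@complex.Re _)) /= H.
have h1 : a ^+ 2 + b ^+ 2 = 1.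
  by rewrite -(@sqr_sqrtr _ (a ^+ 2 + b ^+ 2)) ?H ?expr1n // addr_ge0 ?sqr_ge0.
have -> : b * b = 1 - a ^+ 2.
  by rewrite -h1 expr2; ring.
rewrite expr2; ring.
Qed.

Lemma char_mul2 (R : realType) (Y : topologicalZmodType) (x : char_group R Y) (y : Y) :
  char_val x (y *+ 2) = char_val x y * char_val x y.
Proof.
have := set_valP x; rewrite /= => -[_ Hm _].
by rewrite /char_val set_valE /= mulr2n Hm.
Qed.

Lemma char_norm (R : realType) (Y : topologicalZmodType) (x : char_group R Y) (y : Y) :
  `|char_val x y| = 1.
Proof. by have := set_valP x; rewrite /= => -[_ _ Hn]; exact: Hn. Qed.

Lemma char_Re_bound (R : realType) (Y : topologicalZmodType) (x : char_group R Y) (y : Y) :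
  `|complex.Re (char_val x y)| <= 1.
Proof. by have := Re_le_norm _ (char_val x y); rewrite char_norm. Qed.
Lemma ae_char (R : realType) (Y : topologicalZmodType)
  (mu : probability (g_sigma_algebraType (@open (char_group R Y))) R) (h : Y -> R)
  (hint : forall y, (\int[mu]_x (complex.Re (@char_val R Y x y))%:E = (h y)%:E)%E)
  (hdup : forall y, h (y *+ 2) = 2 * h y ^+ 2 - 1) (y : Y) :
  {ae mu, forall x, complex.Re (@char_val R Y x y) = h y}.
Proof.
pose f := fun x : g_sigma_algebraType (@open (char_group R Y)) => complex.Re (@char_val R Y x y).
pose g := fun x : g_sigma_algebraType (@open (char_group R Y)) => complex.Re (@char_val R Y x (y *+ 2)).
pose c := h y.
have mf : measurable_fun setT f by exact: char_Re_meas.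
have mg : measurable_fun setT g by exact: char_Re_meas.
have int1 : mu.-integrable setT (EFin \o cst (1 : R)) by exact: finite_measure_integrable_cst.
have intf : mu.-integrable setT (EFin \o f).
  apply: le_integrable int1 => //; first exact/measurable_EFinP.
  by move=> x _ /=; rewrite !lee_fin normr1 char_Re_bound.
have intg : mu.-integrable setT (EFin \o g).
  apply: le_integrable int1 => //; first exact/measurable_EFinP.
  by move=> x _ /=; rewrite !lee_fin normr1 char_Re_bound.
have e1 : (\int[mu]_x (f x)%:E = c%:E)%E by exact: hint.
have e2 : (\int[mu]_x (g x)%:E = (2 * c ^+ 2 - 1)%:E)%E by rewrite -hdup; exact: hint.
have gf x : g x = 2 * f x ^+ 2 - 1 by rewrite /g /f char_mul2 Re_sq // char_norm.
have pw x : ((f x - c) ^+ 2)%:E = ((2^-1)%R%:E * (g x)%:E + ((- (2 * c))%R%:E * (f x)%:E + (EFin \o cst (c ^+ 2 + 2^-1)%R) x))%E.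
  by rewrite /= -!EFinM -!EFinD gf; congr EFin; field.
have I0 : (\int[mu]_x ((f x - c) ^+ 2)%:E = 0)%E.
  under eq_integral => x _ do rewrite pw.
  rewrite integralD //; last 2 first.
  - exact: (integrableZl measurableT _ intg).
  - apply: (integrableD measurableT) => //.
    exact: (integrableZl measurableT _ intf).
    exact: finite_measure_integrable_cst.
  rewrite integralD //; last 2 first.
  - exact: (integrableZl measurableT _ intf).
  - exact: finite_measure_integrable_cst.
  rewrite !integralZl // e1 e2.
  have -> : (\int[mu]_x (EFin \o cst (c ^+ 2 + 2^-1)%R) x = (c ^+ 2 + 2^-1)%R%:E)%E.
    rewrite (_ : (EFin \o cst _) = cst ((c ^+ 2 + 2^-1)%R%:E)) //.
    rewrite integral_cst // -[RHS]mule1; congr (_ * _)%E.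
    exact: probability_setT.
  by rewrite -!EFinM -!EFinD; congr EFin; field.
have mF : measurable_fun setT (fun x => ((f x - c) ^+ 2)%:E).
  apply/measurable_EFinP; apply: measurable_funX.
  by apply: measurable_funB => //; exact: measurable_cst.
have I0' : (\int[mu]_x `|((f x - c) ^+ 2)%:E| = 0)%E.
  rewrite -I0; apply: eq_integral => x _.
  by rewrite gee0_abs // lee_fin sqr_ge0.
have := (ae_eq_integral_abs mu measurableT mF).1 I0'.
apply: filterS => x /(_ I) /= [] /eqP.
by rewrite sqrf_eq0 subr_eq0 => /eqP.
Qed.
Lemma char_Re_contY (R : realType) (Y : topologicalZmodType) (x : char_group R Y) :
  continuous (fun z : Y => complex.Re (char_val x z)).
Proof.
have := set_valP x; rewrite /= => -[c _ _] z.
exact: (@continuous_comp _ _ _ (char_val x) (fun w : R[i] => complex.Re w) z (c z) (@Re_cont R _)).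
Qed.
Lemma ae_ex (R : realType) (Y : topologicalZmodType)
  (mu : probability (g_sigma_algebraType (@open (char_group R Y))) R)
  (P : char_group R Y -> Prop) :
  {ae mu, forall x, P x} -> exists x, P x.
Proof.
case=> N [mN muN0 sub]; apply: contrapT => nex.
have NT : N = setT.
  apply/seteqP; split => // x _; apply: sub => /= Px; apply: nex; by exists x.
have H1 : mu N = 1%E by rewrite NT; exact: probability_setT.
move: H1; rewrite muN0 => -[] /eqP; by rewrite eq_sym oner_eq0.
Qed.

Theorem corollary4p3 (R : realType) (Y : topologicalZmodType)
    (Y_hausdorff : hausdorff_space Y)
    (Y_lc : locally_compact [set: Y])
    (Y_sc : @second_countable Y)
    (Y_conn : connected [set: Y])
    (h : Y -> R)
    (h_char : is_real_char_fun h)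
    (h_dup : forall y : Y, h (y *+ 2) = 2 * h y ^+ 2 - 1) :
  exists x0 : char_group R Y, forall y : Y, h y = complex.Re (char_val x0 y).
Proof.
case: h_char => mu hmu.
have A := @ae_char R Y mu h (fun y => (hmu y).1) h_dup.
case: Y_sc => B cB [Bop Bbas].
case/countable_injP: cB => fB fBinj.
pose d := fun U : set Y => xget 0 U.
pose P := fun (n : nat) (x : char_group R Y) =>
  forall U, B U -> fB U = n -> complex.Re (char_val x (d U)) = h (d U).
have FF : Filter (almost_everywhere mu) by exact: ae_filter_ringOfSetsType.
have AP : forall n, {ae mu, forall x, P n x}.
  move=> n; case: (pselect (exists U, B U /\ fB U = n)) => [[U0 [BU0 fU0]]|nex].
    apply: (@filterS _ _ FF _ _ _ (A (d U0))) => x Hx U BU fU.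
    have -> : U = U0 by apply: fBinj; rewrite ?inE // fU fU0.
    exact: Hx.
  apply: aeW => x U BU fU; exfalso; apply: nex; by exists U.
have AD := ae_foralln AP.
case: (@ae_ex _ _ _ _ AD) => x0 Hx0.
exists x0 => y.
have AD2 : {ae mu, forall x, (forall n, P n x) /\ complex.Re (char_val x y) = h y}.
  by apply: (@filterS2 _ _ FF _ _ _ _ AD (A y)) => x H1 H2; split.
case: (@ae_ex _ _ _ _ AD2) => x1 [Hx1 Hy1].
rewrite -Hy1.
pose gd := fun z : Y => complex.Re (char_val x0 z) - complex.Re (char_val x1 z).
have gdc : continuous gd.
  move=> z; exact: (@continuousB _ _ _ (fun z => complex.Re (char_val x0 z)) (fun z => complex.Re (char_val x1 z)) z (@char_Re_contY R Y x0 z) (@char_Re_contY R Y x1 z)).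
apply/eqP; rewrite eq_sym -subr_eq0; apply/eqP.
apply: contrapT => gy.
have e0 : 0 < `|gd y| by rewrite normr_gt0; apply/eqP.
have := (@cvgrPdist_lt _ _ _ _ (nbhs_filter y) gd (gd y)).1 (gdc y) _ e0.
move=> /Bbas [U [BU Uy] UW].
have Ud : U (d U) by apply: xgetI Uy.
have := UW _ Ud; rewrite /gd /=.
rewrite (Hx0 (fB U) U BU erefl) (Hx1 (fB U) U BU erefl) subrr.
by rewrite subr0 ltxx.
Qed.
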